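(* Assume $\delta\in(0,1]$. Consider a subcritical sequence of action profiles $(\mathbf p,\mathbf q)$ (not necessarily equilibria) such that $\sup_n\max_i\iota(q_i,q_i)\,n<\infty$. Then the limiting probability that a firm learns $y$ ideas decays exponentially in $y$: there exist constants $C>0$ and $y_0$ such that for every integer $y\ge y_0$, $$\limsup_{n\to\infty}\max_i\mathbb P\big[|I_i(\mathbf p,\mathbf q)|=y\big]\le e^{-Cy}.$$
   Context: Model (for each number of firms $n\ge 2$). There are $n$ firms $1,\dots,n$; firm $i$ can discover a single idea, also labelled $i$. A parameter $\delta\in[0,1]$ is fixed. Each firm $i$ has an action $(p_i,q_i)\in[0,1)\times[0,1]$. Idea $i$ is discovered independently with probability $p_i$; $I$ is the random set of discovered ideas. The interaction rate is $\iota(q_i,q_j)=q_iq_j$. For each ordered pair $i\neq j$, independently, $i$ learns directly from $j$ with probability $\iota(q_i,q_j)$, and conditional on this, independently with probability $\delta$, $i$ also learns indirectly through $j$. The indirect-learning network has an edge $j\to i$ whenever $i$ learns indirectly through $j$. $I_i(\mathbf p,\mathbf q)=\{j\in I\setminus\{i\}:$ some firm $m$, with $m=i$ or with a directed path from $m$ to $i$ in the indirect-learning network, learns directly from $j\}$. Criticality: let $\lambda$ be the spectral radius of the $n\times n$ matrix with $(i,j)$ entry $\delta\iota(q_i,q_j)$; a sequence (indexed by $n\to\infty$) of profiles is subcritical if $\limsup_n\lambda<1$. *)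

(* Defs.v *)
From Stdlib Require Import Reals.
From mathcomp Require Import all_boot.
Open Scope R_scope.
Set Implicit Arguments. Unset Strict Implicit. Unset Printing Implicit Defensive.

(* Outcome space for n firms: the set of discovered ideas (d i = true iff idea i
   discovered) and, for each ordered pair (i,j), a state s(i,j) in {0,1,2}:
   0 = i does not learn directly from j,
   1 = i learns directly from j but not indirectly through j,
   2 = i learns directly from j and also indirectly through j.
   Diagonal pairs (i,i) are dummy and forced to state 0 (weight 1). *)
Definition Omega (n : nat) : finType :=
  ({ffun 'I_n -> bool} * {ffun 'I_n * 'I_n -> 'I_3})%type.

Definition pair_weight (delta qi qj : R) (diag : bool) (s : nat) : R :=
  if diag then (if s == 0%N then 1 else 0)
  else if s == 0%N then (1 - qi * qj)
  else if s == 1%N then (qi * qj * (1 - delta))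
  else (qi * qj * delta).

Definition weight (n : nat) (delta : R) (p q : nat -> R) (w : Omega n) : R :=
  (\big[Rmult/1]_(i : 'I_n) (if w.1 i then p i else 1 - p i)
   * \big[Rmult/1]_(e : 'I_n * 'I_n)
        pair_weight delta (q e.1) (q e.2) (e.1 == e.2) (w.2 e)).

Definition Prob (n : nat) (delta : R) (p q : nat -> R) (E : pred (Omega n)) : R :=
  \big[Rplus/0]_(w : Omega n | E w) weight delta p q w.

Definition indirect_edge (n : nat) (w : Omega n) : rel 'I_n :=
  fun j i => (i != j) && (nat_of_ord (w.2 (i, j)) == 2%N).

Definition direct (n : nat) (w : Omega n) (m j : 'I_n) : bool :=
  (m != j) && (nat_of_ord (w.2 (m, j)) != 0%N).

(* I_i(p,q): ideas j in I \ {i} such that some m with m = i or a directed path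
   m -> ... -> i in the indirect-learning network learns directly from j
   (connect is the reflexive-transitive closure, covering m = i). *)
Definition learned_set (n : nat) (w : Omega n) (i : 'I_n) : {set 'I_n} :=
  [set j | w.1 j && (j != i)
           && [exists m, connect (@indirect_edge n w) m i && direct w m j]].

(* Subcriticality: limsup_n (spectral radius of the matrix (delta q_i q_j)) < 1.
   The matrix is real symmetric, so all its eigenvalues are real; we write
   "limsup_n rho_n < 1" as: there is c < 1 such that eventually every (real)
   eigenvalue has absolute value <= c. *)
Definition subcritical (delta : R) (q : nat -> nat -> R) : Prop :=
  exists c : R, (c < 1) /\ exists N : nat, forall n : nat, (N <= n)%N ->
    forall (lam : R) (v : nat -> R),
      (exists i, (i < n)%N /\ v i <> 0) ->
      (forall i, (i < n)%N ->
         \big[Rplus/0]_(j < n) (delta * (q n i * q n j) * v j) = (lam * v i)) ->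
      (Rabs lam <= c).

(* Main.v *)
Require Import Defs.
From Stdlib Require Import Reals.
From mathcomp Require Import all_boot.
Open Scope R_scope.
From HB Require Import structures.
From Stdlib Require Import Lra Classical.
Set Implicit Arguments. Unset Strict Implicit. Unset Printing Implicit Defensive.

Lemma RplusA : associative Rplus. Proof. by move=> *; rewrite Rplus_assoc. Qed.
Lemma RmultA : associative Rmult. Proof. by move=> *; rewrite Rmult_assoc. Qed.
HB.instance Definition _ := Monoid.isComLaw.Build R 0 Rplus RplusA Rplus_comm Rplus_0_l.
HB.instance Definition _ := Monoid.isComLaw.Build R 1 Rmult RmultA Rmult_comm Rmult_1_l.
HB.instance Definition _ := Monoid.isMulLaw.Build R 0 Rmult Rmult_0_l Rmult_0_r.
HB.instance Definition _ := Monoid.isAddLaw.Build R Rmult Rplus Rmult_plus_distr_r Rmult_plus_distr_l.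

Section Gen.
Variable I : finType.

Lemma sumR_le (P : pred I) (F G : I -> R) :
  (forall i, P i -> F i <= G i) ->
  \big[Rplus/0]_(i | P i) F i <= \big[Rplus/0]_(i | P i) G i.
Proof. move=> H; apply: (big_ind2 (fun x y => x <= y)) => //; [lra|]. by move=> *; lra. Qed.

Lemma sumR_ge0 (P : pred I) (F : I -> R) :
  (forall i, P i -> 0 <= F i) -> 0 <= \big[Rplus/0]_(i | P i) F i.
Proof. move=> H; apply: (big_ind (fun x => 0 <= x)) => //; [lra|]. by move=> *; lra. Qed.

Lemma prodR_ge0 (P : pred I) (F : I -> R) :
  (forall i, P i -> 0 <= F i) -> 0 <= \big[Rmult/1]_(i | P i) F i.
Proof. move=> H; apply: (big_ind (fun x => 0 <= x)) => //; [lra|]. by move=> *; apply: Rmult_le_pos. Qed.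

Lemma prodR_ge1 (P : pred I) (F : I -> R) :
  (forall i, P i -> 1 <= F i) -> 1 <= \big[Rmult/1]_(i | P i) F i.
Proof. move=> H; apply: (big_ind (fun x => 1 <= x)) => //; [lra|]. by move=> *; nra. Qed.

Lemma prodR_le (P : pred I) (F G : I -> R) :
  (forall i, P i -> 0 <= F i <= G i) ->
  \big[Rmult/1]_(i | P i) F i <= \big[Rmult/1]_(i | P i) G i.
Proof.
move=> H.
have: 0 <= \big[Rmult/1]_(i | P i) F i <= \big[Rmult/1]_(i | P i) G i.
  apply: (big_ind2 (fun x y => 0 <= x <= y)) => //; [lra|].
  move=> x1 x2 y1 y2 [h1 h2] [h3 h4]; split; [nra|].
  by apply: Rmult_le_compat.
by case.
Qed.

Variable X : finType.
Variable w : I -> X -> R.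
Definition W (s : {ffun I -> X}) := \big[Rmult/1]_i w i (s i).

Hypothesis w1 : forall i, \big[Rplus/0]_x w i x = 1.

Lemma sumW1 : \big[Rplus/0]_s W s = 1.
Proof.
rewrite /W -(bigA_distr_bigA (fun i x => w i x)).
by rewrite big1 // => i _; rewrite w1.
Qed.

Lemma sumW_prod (psi : I -> X -> R) :
  \big[Rplus/0]_s (W s * \big[Rmult/1]_i psi i (s i)) =
  \big[Rmult/1]_i \big[Rplus/0]_x (w i x * psi i x).
Proof.
rewrite (bigA_distr_bigA (fun i x => w i x * psi i x)).
by apply: eq_bigr => s _; rewrite /W big_split.
Qed.

Definition mg (P : pred I) (a b : {ffun I -> X}) : {ffun I -> X} :=
  [ffun i => if P i then a i else b i].

Lemma indep (P : pred I) (g h : {ffun I -> X} -> R) :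
  (forall s s' : {ffun I -> X}, (forall i, P i -> s i = s' i) -> g s = g s') ->
  (forall s s' : {ffun I -> X}, (forall i, ~~ P i -> s i = s' i) -> h s = h s') ->
  \big[Rplus/0]_s (W s * (g s * h s)) =
  (\big[Rplus/0]_s (W s * g s)) * (\big[Rplus/0]_s (W s * h s)).
Proof.
move=> Hg Hh.
symmetry; rewrite big_distrl /=.
rewrite (eq_bigr (fun s1 => \big[Rplus/0]_s2 (W s1 * g s1 * (W s2 * h s2)))); last first.
  by move=> s1 _; rewrite big_distrr.
rewrite pair_bigA /=.
pose phi (p : {ffun I -> X} * {ffun I -> X}) := (mg P p.1 p.2, mg P p.2 p.1).
have phiK : involutive phi.
  move=> [a b]; rewrite /phi /=; congr pair; apply/ffunP => i; rewrite !ffunE;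
  by case: (P i).
rewrite (reindex_inj (can_inj phiK)) /=.
rewrite -[RHS]Rmult_1_r -sumW1 big_distrl /=.
rewrite (eq_bigr (fun s1 => \big[Rplus/0]_s2 (W s1 * (g s1 * h s1) * W s2)) (P:=xpredT) (r:=index_enum _) (F1 := fun s1 => W s1 * (g s1 * h s1) * \big[Rplus/0]_s W s)); last first.
  by move=> s1 _; rewrite big_distrr.
rewrite pair_bigA /=.
apply: eq_bigr => [[a b]] _ /=.
have e1 : g (mg P a b) = g a by apply: Hg => i Pi; rewrite ffunE Pi.
have e2 : h (mg P b a) = h a by apply: Hh => i Pi; rewrite ffunE (negbTE Pi).
rewrite e1 e2.
have e3 : W (mg P a b) * W (mg P b a) = W a * W b.
  rewrite /W -!big_split /=; apply: eq_bigr => i _; rewrite !ffunE.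
  by case: (P i) => //; rewrite Rmult_comm.
transitivity ((W (mg P a b) * W (mg P b a)) * (g a * h a)); first by ring.
rewrite e3; ring.
Qed.

End Gen.


Section Graph.
Variable n : nat.
Local Notation I := 'I_n.
Local Notation S := {ffun I * I -> 'I_3}.

Definition ie (s : S) : rel I := fun a b => (b != a) && (nat_of_ord (s (b, a)) == 2%N).
Definition relT (T : {set I}) (s : S) : rel I :=
  fun a b => (a \in T) && (b \in T) && ie s a b.
Definition Aset (T U : {set I}) (s : S) : {set I} :=
  [set m | (m \in T) && [exists u, (u \in U) && (u \in T) && connect (relT T s) m u]].
Definition dir (s : S) (m j : I) := (m != j) && (nat_of_ord (s (m, j)) != 0%N).
Definition Dset (s : S) (m : I) : {set I} := [set j | dir s m j].
Definition Dn (s : S) (m : I) : nat := #|Dset s m|.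
Definition fT (T U : {set I}) (s : S) : nat := (\sum_(m in Aset T U s) Dn s m)%N.
Definition Ch (T : {set I}) (s : S) (u : I) : {set I} :=
  [set v | (v \in T) && (v != u) && (nat_of_ord (s (u, v)) == 2%N)].

Lemma path_inv (e : rel I) (Q : I -> Prop) x p :
  Q x -> (forall a b, Q a -> e a b -> Q b) -> path e x p -> Q (last x p).
Proof.
elim: p x => [|y p IH] x Qx He //= /andP[exy pp].
by apply: IH => //; apply: He exy.
Qed.

Lemma decomp (T U : {set I}) (s : S) (u : I) : u \in T ->
  Aset T U s \subset u |: Aset (T :\ u) ((U :\ u) :|: Ch T s u) s.
Proof.
move=> uT; apply/subsetP => m; rewrite !inE => /andP[mT /existsP[u' /andP[/andP[u'U u'T] c]]].
case: (eqVneq m u) => [->|mu] //=; rewrite mT /=.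
set e' := relT (T :\ u) s.
pose Q x := (connect e' m x /\ x != u) \/ (exists v, v \in Ch T s u /\ connect e' m v).
move/connectP: c => [pth Hp Hl].
have : Q (last m pth).
  apply: (path_inv (e:= relT T s)) Hp.
  - by left; split.
  move=> a b [[ca au]|ex] /andP[/andP[aT bT] eab]; last by right.
  case: (eqVneq b u) => [bu|bu].
    right; exists a; split => //; rewrite inE aT au /=.
    by move: eab; rewrite /ie bu => /andP[].
  left; split => //; apply: (connect_trans ca); apply: connect1.
  by rewrite /e' /relT !inE aT bT au bu.
move=> [[cl lu]|[v [vC cv]]]; apply/existsP.
  exists (last m pth); rewrite -Hl in cl lu *; rewrite !inE cl lu u'U u'T /=.
  by [].
exists v; have := vC; rewrite inE => /andP[/andP[vT vu] _].
by rewrite cv andbT in_setU vC orbT /= !inE vT vu.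
Qed.

Lemma sum_subset (A B : {set I}) (F : I -> nat) : A \subset B ->
  (\sum_(i in A) F i <= \sum_(i in B) F i)%N.
Proof.
move=> /subsetP H; rewrite [X in (X <= _)%N]big_mkcond [X in (_ <= X)%N]big_mkcond.
apply: leq_sum => i _; case: ifP => iA //; by rewrite (H _ iA).
Qed.

Lemma fT_decomp (T U : {set I}) (s : S) (u : I) : u \in T ->
  (fT T U s <= Dn s u + fT (T :\ u) ((U :\ u) :|: Ch T s u) s)%N.
Proof.
move=> uT; rewrite /fT.
apply: leq_trans (sum_subset _ (decomp U s uT)) _.
rewrite big_setU1 //= inE; apply/negP => /andP[]; rewrite !inE eqxx //.
Qed.

Lemma fT_local (T V : {set I}) (s s' : S) :
  (forall e : I * I, e.1 \in T -> s e = s' e) -> fT T V s = fT T V s'.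
Proof.
move=> H.
have Hr : relT T s =2 relT T s'.
  move=> a b; rewrite /relT; case bT: (b \in T); rewrite ?andbF //= /ie.
  by rewrite (H (b, a)).
have Hc := eq_connect Hr.
have HA : Aset T V s = Aset T V s'.
  apply/setP => m; rewrite !inE; congr andb; apply: eq_existsb => x.
  by rewrite Hc.
rewrite /fT HA; apply: eq_bigr => m; rewrite inE => /andP[mT _].
rewrite /Dn; apply: eq_card => j; rewrite !inE /dir.
by rewrite (H (m, j)).
Qed.

Lemma row_local (T : {set I}) (s s' : S) (u : I) :
  (forall e : I * I, e.1 == u -> s e = s' e) -> Ch T s u = Ch T s' u /\ Dn s u = Dn s' u.
Proof.
move=> H; split.
  by apply/setP => v; rewrite !inE (H (u, v)) //=.
by rewrite /Dn; apply: eq_card => j; rewrite !inE /dir (H (u, j)).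
Qed.

Lemma Aset_empty (T U : {set I}) (s : S) : U :&: T = set0 -> Aset T U s = set0.
Proof.
move=> H; apply/setP => m; rewrite !inE; apply/negbTE/negP => /andP[_ /existsP[x]].
move=> /andP[/andP[xU xT] _].
have : x \in U :&: T by rewrite inE xU xT.
by rewrite H inE.
Qed.

End Graph.


Section Prob.
Variable n : nat.
Local Notation I := 'I_n.
Local Notation S := {ffun I * I -> 'I_3}.
Variable w : I * I -> 'I_3 -> R.
Hypothesis w1 : forall e, \big[Rplus/0]_x w e x = 1.
Hypothesis w0 : forall e x, 0 <= w e x.
Local Notation W := (W w).

Lemma W0 s : 0 <= W s.
Proof. by apply: prodR_ge0 => e _; apply: w0. Qed.

Lemma sum_ind (V0 : {set I}) (a : {set I} -> R) :
  \big[Rplus/0]_V (if V0 == V then a V else 0) = a V0.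
Proof.
rewrite -big_mkcond /= (big_pred1 V0) // => V /=; by rewrite eq_sym.
Qed.

Lemma cond_bound (G : S -> R) (Vf : S -> {set I}) (H : {set I} -> S -> R)
    (B : {set I} -> R) :
  (forall V, \big[Rplus/0]_s (W s * ((if Vf s == V then G s else 0) * H V s)) <=
             (\big[Rplus/0]_s (W s * (if Vf s == V then G s else 0))) * B V) ->
  \big[Rplus/0]_s (W s * (G s * H (Vf s) s)) <=
  \big[Rplus/0]_s (W s * (G s * B (Vf s))).
Proof.
move=> HV.
have e1 : forall s, W s * (G s * H (Vf s) s) =
   \big[Rplus/0]_V (W s * ((if Vf s == V then G s else 0) * H V s)).
  move=> s; rewrite -(sum_ind (Vf s) (fun V => W s * (G s * H V s))).
  by apply: eq_bigr => V _; case: ifP => _; ring.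
have e2 : forall s, W s * (G s * B (Vf s)) =
   \big[Rplus/0]_V (W s * (if Vf s == V then G s else 0) * B V).
  move=> s; rewrite -(sum_ind (Vf s) (fun V => W s * (G s * B V))).
  by apply: eq_bigr => V _; case: ifP => _; ring.
rewrite (eq_bigr _ (fun s _ => e1 s)) (eq_bigr _ (fun s _ => e2 s)).
rewrite exchange_big [X in _ <= X]exchange_big /=.
apply: sumR_le => V _.
apply: Rle_trans (HV V) _.
by rewrite big_distrl /=; apply: Req_le.
Qed.

Variable z : R.
Hypothesis z1 : 1 <= z.
Variable Phi : I -> R.
Hypothesis Phi1 : forall i, 1 <= Phi i.
Hypothesis HR : forall (T : {set I}) (u : I),
  \big[Rplus/0]_s (W s * (z ^ (Dn s u) * \big[Rmult/1]_(v in Ch T s u) Phi v)) <= Phi u.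

Lemma pow_mono a b : (a <= b)%N -> z ^ a <= z ^ b.
Proof. by move=> /leP; apply: Rle_pow. Qed.

Lemma pow_ge0 a : 0 <= z ^ a.
Proof. apply: pow_le; lra. Qed.

Lemma prod_setU (A B : {set I}) :
  \big[Rmult/1]_(v in A :|: B) Phi v <=
  \big[Rmult/1]_(v in A) Phi v * \big[Rmult/1]_(v in B) Phi v.
Proof.
rewrite !(big_mkcond (fun v => v \in _)) -big_split /=.
apply: prodR_le => v _; rewrite inE.
have := Phi1 v; case: (v \in A); case: (v \in B) => /=; split; nra.
Qed.

Lemma main_ind k : forall (T : {set I}), (#|T| <= k)%N -> forall (U : {set I}),
  \big[Rplus/0]_s (W s * z ^ (fT T U s)) <= \big[Rmult/1]_(u in U) Phi u.
Proof.
have base : forall T U, U :&: T = set0 ->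
  \big[Rplus/0]_s (W s * z ^ (fT T U s)) <= \big[Rmult/1]_(u in U) Phi u.
  move=> T U H.
  rewrite (eq_bigr (fun s => W s)); last first.
    by move=> s _; rewrite /fT Aset_empty // big_set0 /=; ring.
  rewrite sumW1 //; by apply: prodR_ge1.
elim: k => [|k IH] T hT U.
  apply: base; apply/setP => x; rewrite !inE.
  have : T = set0 by apply/eqP; rewrite -cards_eq0 -leqn0.
  by move=> ->; rewrite inE andbF.
case: (set_0Vmem (U :&: T)) => [H0|[u]]; first by apply: base.
rewrite inE => /andP[uU uT].
set U' := fun s => (U :\ u) :|: Ch T s u.
have hT' : (#|T :\ u| <= k)%N.
  by move: hT; rewrite (cardsD1 u T) uT.
have step1 : \big[Rplus/0]_s (W s * z ^ (fT T U s)) <=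
   \big[Rplus/0]_s (W s * (z ^ (Dn s u) * z ^ (fT (T :\ u) (U' s) s))).
  apply: sumR_le => s _; rewrite -pow_add; apply: Rmult_le_compat_l; first exact: W0.
  by apply: pow_mono; apply: fT_decomp.
apply: Rle_trans step1 _.
have step2 := @cond_bound (fun s => z ^ (Dn s u)) U'
   (fun V s => z ^ (fT (T :\ u) V s)) (fun V => \big[Rmult/1]_(v in V) Phi v).
apply: Rle_trans (step2 _) _.
  move=> V.
  rewrite (@indep _ _ w w1 (fun e => e.1 == u)
     (fun s => if U' s == V then z ^ Dn s u else 0) (fun s => z ^ fT (T :\ u) V s)).
  - apply: Rmult_le_compat_l; last exact: IH.
    apply: sumR_ge0 => s _; apply: Rmult_le_pos; first exact: W0.
    by case: ifP => _; [apply: pow_ge0|lra].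
  - move=> s s' H; have [e1 e2] := row_local T H.
    by rewrite /U' e1 e2.
  - move=> s s' H; rewrite (@fT_local _ _ V s s') // => e; rewrite inE => /andP[eu _].
    by apply: H; move: eu; rewrite inE.
apply: (@Rle_trans _ (\big[Rplus/0]_s (W s * (z ^ Dn s u *
    (\big[Rmult/1]_(v in U :\ u) Phi v * \big[Rmult/1]_(v in Ch T s u) Phi v))))).
  apply: sumR_le => s _; apply: Rmult_le_compat_l; first exact: W0.
  by apply: Rmult_le_compat_l; [apply: pow_ge0|apply: prod_setU].
rewrite [X in _ <= X](bigD1 u) //= [X in _ <= X]Rmult_comm.
rewrite [X in _ <= X * _](eq_bigl (fun v => v \in U :\ u)); last by move=> v; rewrite !inE andbC.
rewrite (eq_bigr (fun s => \big[Rmult/1]_(v in U :\ u) Phi v *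
    (W s * (z ^ Dn s u * \big[Rmult/1]_(v in Ch T s u) Phi v)))); last first.
  by move=> s _; move: (z ^ Dn s u) (W s) (\big[Rmult/1]_(v in U :\ u) Phi v) (\big[Rmult/1]_(v in Ch T s u) Phi v) => a b c d; ring.
rewrite -big_distrr /=.
apply: Rmult_le_compat_l; last exact: HR.
by apply: prodR_ge0 => v _; have := Phi1 v; lra.
Qed.

End Prob.


Lemma pow_card (I : finType) (A : {set I}) z :
  z ^ #|A| = \big[Rmult/1]_(j : I) (if j \in A then z else 1).
Proof.
rewrite -big_mkcond big_const /=.
by elim: #|A| => //= k ->.
Qed.

Lemma exp_sum (I : finType) (F : I -> R) :
  exp (\big[Rplus/0]_i F i) = \big[Rmult/1]_i exp (F i).
Proof. by apply: (big_morph exp exp_plus exp_0). Qed.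

Lemma prod_pair (I J : finType) (F : I * J -> R) :
  \big[Rmult/1]_(e : I * J) F e = \big[Rmult/1]_(a : I) \big[Rmult/1]_(b : J) F (a, b).
Proof. by rewrite pair_bigA; apply: eq_bigr => [[a b]]. Qed.

Lemma exp_le x y : x <= y -> exp x <= exp y.
Proof.
move=> H; case: (Rle_lt_or_eq_dec _ _ H) => h; last by rewrite h; lra.
by apply: Rlt_le; apply: exp_increasing.
Qed.

Section Row.
Variable n : nat.
Local Notation I := 'I_n.
Local Notation S := {ffun I * I -> 'I_3}.
Variable delta : R.
Hypothesis hd : 0 < delta <= 1.
Variable q : nat -> R.
Hypothesis hq : forall i : I, 0 <= q i <= 1.
Definition wq (e : I * I) (x : 'I_3) : R :=
  pair_weight delta (q e.1) (q e.2) (e.1 == e.2) x.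

Lemma wq1 e : \big[Rplus/0]_x wq e x = 1.
Proof.
rewrite !big_ord_recl big_ord0 /wq /pair_weight /=.
by case: (e.1 == e.2) => /=; ring.
Qed.

Lemma wq0 e x : 0 <= wq e x.
Proof.
have := hq e.1; have := hq e.2.
rewrite /wq /pair_weight; case: (e.1 == e.2); case: (nat_of_ord x == 0%N);
case: (nat_of_ord x == 1%N) => /=; intros; try lra; try nra.
all: apply: Rmult_le_pos; nra.
Qed.

Variable z : R.
Hypothesis z1 : 1 <= z.
Variable beta : R.
Definition Phi (v : I) := exp (beta * q v).
Hypothesis beta0 : 0 <= beta.
Hypothesis Hsum : \big[Rplus/0]_(b : I) (q b * ((z - 1) + delta * z * (Phi b - 1))) <= beta.

Lemma Phi1 v : 1 <= Phi v.
Proof.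
rewrite /Phi; have := exp_ineq1_le (beta * q v); have := hq v; nra.
Qed.

Definition psi (T : {set I}) (u b : I) (x : 'I_3) : R :=
  (if (u != b) && (nat_of_ord x != 0%N) then z else 1) *
  (if (b \in T) && (b != u) && (nat_of_ord x == 2%N) then Phi b else 1).

Lemma row_expr (T : {set I}) (u : I) (s : S) :
  z ^ (Dn s u) * \big[Rmult/1]_(v in Ch T s u) Phi v =
  \big[Rmult/1]_(e : I * I) (if e.1 == u then psi T u e.2 (s e) else 1).
Proof.
transitivity (\big[Rmult/1]_(a : I) \big[Rmult/1]_(b : I)
    (if a == u then psi T u b (s (a, b)) else 1)); last first.
  by rewrite pair_bigA; apply: eq_bigr => [[a b]].
rewrite [RHS](bigD1 u) //= eqxx [X in _ = _ * X]big1 ?Rmult_1_r; last first.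
  by move=> a /negbTE ->; rewrite big1.
rewrite /Dn pow_card [X in _ * X = _]big_mkcond /= -big_split /=.
apply: eq_bigr => b _; rewrite /psi !inE /dir.
by [].
Qed.

Lemma row_bound (T : {set I}) (u : I) :
  \big[Rplus/0]_s (W wq s * (z ^ (Dn s u) * \big[Rmult/1]_(v in Ch T s u) Phi v))
  <= Phi u.
Proof.
under eq_bigr do rewrite row_expr.
rewrite (@sumW_prod _ _ wq (fun e x => if e.1 == u then psi T u e.2 x else 1)).
rewrite prod_pair (bigD1 u) //= eqxx [X in _ * X]big1 ?Rmult_1_r; last first.
  move=> a /negbTE au; apply: big1 => b _; rewrite /= au.
  rewrite (eq_bigr (fun x => wq (a, b) x)) ?wq1 // => x _; ring.
apply: Rle_trans (_ : \big[Rmult/1]_(b : I) exp (q u * (q b * ((z - 1) + delta * z * (Phi b - 1))))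
   <= Phi u).
  apply: prodR_le => b _.
  have hu := hq u; have hb := hq b; have hP := Phi1 b.
  have hE := exp_ineq1_le (q u * (q b * (z - 1 + delta * z * (Phi b - 1)))).
  have hE0 : 0 <= q u * (q b * (z - 1 + delta * z * (Phi b - 1))).
    apply: Rmult_le_pos; first lra; apply: Rmult_le_pos; first lra.
    have : 0 <= delta * z * (Phi b - 1) by apply: Rmult_le_pos; nra.
    lra.
  rewrite !big_ord_recl big_ord0 /wq /psi /pair_weight /=.
  case: (eqVneq u b) => [eub|ub] /=.
    subst b.
    rewrite eqxx !andbF /=; split; lra.
  rewrite !andbT /bump /=.
  have hq2 : 0 <= q u * q b <= 1 by split; nra.
  case: (b \in T) => /=; split.
  - have : 0 <= q u * q b * delta * (z * Phi b) by apply: Rmult_le_pos; nra.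
    have : 0 <= q u * q b * (1 - delta) * z by apply: Rmult_le_pos; nra.
    nra.
  - nra.
  - nra.
  - have h1 : 0 <= q u * q b * (delta * z * (Phi b - 1)).
      apply: Rmult_le_pos; [lra| apply: Rmult_le_pos; [apply: Rmult_le_pos; lra|lra]].
    lra.
rewrite -exp_sum /Phi; apply: exp_le.
rewrite -big_distrr /= Rmult_comm.
by apply: Rmult_le_compat_r; [case: (hq u)|].
Qed.
End Row.


Lemma card_bigcup_le (I J : finType) (A : {set I}) (F : I -> {set J}) :
  (#|\bigcup_(m in A) F m| <= \sum_(m in A) #|F m|)%N.
Proof.
apply: (big_ind2 (fun (S : {set J}) k => #|S| <= k)%N) => //.
- by rewrite cards0.
- move=> x1 x2 y1 y2 h1 h2; apply: leq_trans (leq_card_setU x1 y1).1 _.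
  exact: leq_add.
Qed.

Section Final.
Variable n : nat.
Local Notation I := 'I_n.
Variable delta : R.
Hypothesis hd : 0 < delta <= 1.
Variable p q : nat -> R.
Hypothesis hp : forall i : I, 0 <= p i <= 1.
Hypothesis hq : forall i : I, 0 <= q i <= 1.
Variable z : R.
Hypothesis z1 : 1 <= z.
Variable beta : R.
Hypothesis beta0 : 0 <= beta.
Hypothesis Hsum : \big[Rplus/0]_(b : I) (q b * ((z - 1) + delta * z * (Phi q beta b - 1))) <= beta.

Lemma learned_le (w : Omega n) (i : I) :
  (#|learned_set w i| <= fT setT [set i] w.2)%N.
Proof.
apply: leq_trans (card_bigcup_le (Aset setT [set i] w.2) (Dset w.2)).
apply: subset_leq_card; apply/subsetP => j; rewrite inE => /andP[_ /existsP[m /andP[c d]]].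
apply/bigcupP; exists m.
  rewrite inE in_setT /=; apply/existsP; exists i; rewrite inE eqxx in_setT /=.
  by rewrite (@eq_connect _ _ (indirect_edge w)) // => a b; rewrite /relT !in_setT.
by rewrite inE.
Qed.

Lemma Ez_bound (i : I) :
  \big[Rplus/0]_s (W (wq delta q) s * z ^ (fT setT [set i] s)) <= Phi q beta i.
Proof.
have := @main_ind n (wq delta q) (wq1 delta q) (wq0 hd hq) z z1 (Phi q beta)
   (Phi1 hq beta0) (row_bound hd hq z1 beta0 Hsum) #|[set: I]| setT (leqnn _) [set i].
by rewrite big_set1.
Qed.

Lemma prob_bound (i : I) (y : nat) :
  Prob delta p q (fun w => #|learned_set w i| == y) <= Phi q beta i / z ^ y.
Proof.
have zy : 0 < z ^ y by apply: pow_lt; lra.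
rewrite /Prob.
apply: (@Rle_trans _ (\big[Rplus/0]_(w : Omega n)
    (weight delta p q w * (z ^ (fT setT [set i] w.2) / z ^ y)))).
  rewrite big_mkcond /=; apply: sumR_le => w _.
  have hw : 0 <= weight delta p q w.
    apply: Rmult_le_pos; apply: prodR_ge0 => k _.
    + by case: (w.1 k); have := hp k; lra.
    + exact: wq0.
  case: eqP => [hy|_].
  - have : z ^ y <= z ^ (fT setT [set i] w.2).
      by apply: pow_mono => //; rewrite -hy; apply: learned_le.
    move=> h; have : 1 <= z ^ fT setT [set i] w.2 / z ^ y.
      apply: (Rmult_le_reg_r (z ^ y)) => //.
      rewrite Rmult_1_l /Rdiv Rmult_assoc Rinv_l ?Rmult_1_r //; lra.
    move=> h1; rewrite -{1}(Rmult_1_r (weight _ _ _ w)); exact: Rmult_le_compat_l.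
  - apply: Rmult_le_pos => //; apply: Rmult_le_pos; first exact: pow_ge0.
    by apply: Rlt_le; apply: Rinv_0_lt_compat.
pose wd (k : I) (b : bool) := if b then p k else 1 - p k.
have wd1 : forall k, \big[Rplus/0]_b wd k b = 1.
  by move=> k; rewrite big_bool /wd /=; change (Rplus (p k) (1 - p k) = 1); ring.
pose G s := W (wq delta q) s * z ^ (fT setT [set i] s).
have -> : \big[Rplus/0]_(w : Omega n)
    (weight delta p q w * (z ^ fT [set: I] [set i] w.2 / z ^ y)) =
  \big[Rplus/0]_(d : {ffun I -> bool}) \big[Rplus/0]_(s : {ffun I * I -> 'I_3})
   (W wd d * G s * / z ^ y).
  rewrite pair_bigA /=; apply: eq_bigr => w _; rewrite /weight /G /W /wd /Rdiv.
  rewrite /wq; move: (\big[Rmult/1]_(i0 < n) _) (\big[Rmult/1]_(e : I * I) _) (z ^ _) (/ z ^ y) => a b c d; ring.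
under eq_bigr do rewrite -big_distrl /= -big_distrr /=.
rewrite -big_distrl /= -big_distrl /= (sumW1 wd1) Rmult_1_l.
apply: Rmult_le_compat_r; first by apply: Rlt_le; apply: Rinv_0_lt_compat.
exact: Ez_bound.
Qed.
End Final.


Lemma sum_const_ord (n : nat) (a : R) : \big[Rplus/0]_(b < n) a = INR n * a.
Proof.
rewrite big_const_ord; elim: n => [|k IH]; first by rewrite /=; ring.
rewrite iterS IH S_INR; ring.
Qed.

Lemma exp_bound x L : 0 <= x -> x <= L -> L < 1 -> (exp x - 1) * (1 - L) <= x.
Proof.
move=> h0 h1 h2.
have e1 := exp_ineq1_le (- x).
have e2 : exp x * exp (- x) = 1 by rewrite -exp_plus Rplus_opp_r exp_0.
have e3 := exp_ineq1_le x.
have : exp x * (1 - x) <= 1.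
  rewrite -e2; apply: Rmult_le_compat_l; [apply: Rlt_le; apply: exp_pos|lra].
move=> h; nra.
Qed.

Lemma sqrt_bound x K : 0 <= x -> x * x <= K -> x <= sqrt K.
Proof.
move=> h0 h1; rewrite -(sqrt_square x) //; apply: sqrt_le_1_alt; lra.
Qed.

Section Hsum.
Variable n : nat.
Local Notation I := 'I_n.
Variable delta : R.
Hypothesis hd : 0 < delta <= 1.
Variable q : nat -> R.
Hypothesis hq : forall i : I, 0 <= q i <= 1.
Variables sK c : R.
Hypothesis sK0 : 0 < sK.
Hypothesis hc : 0 <= c < 1.
Hypothesis hn : (2 <= n)%N.
Hypothesis Hqb : forall b : I, sqrt (INR n) * q b <= sK.
Hypothesis HS : delta * \big[Rplus/0]_(b : I) (q b * q b) <= c.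

Definition LL := (1 - c) / 4.
Definition b0 := LL / (sK + 1).
Definition rho := c / (1 - LL).
Definition zz := (b0 + sK) / (sK + rho * b0).
Definition bb := b0 * sqrt (INR n).

Lemma LL_pos : 0 < LL /\ LL <= 1/4.
Proof. rewrite /LL; split; lra. Qed.

Lemma b0_pos : 0 < b0.
Proof. rewrite /b0; have := LL_pos; move=> [h _]; apply: Rdiv_lt_0_compat; lra. Qed.

Lemma rho_bd : 0 <= rho < 1.
Proof.
have [h1 h2] := LL_pos; rewrite /rho; split.
  apply: Rmult_le_pos; first lra; apply: Rlt_le; apply: Rinv_0_lt_compat; lra.
apply: (Rmult_lt_reg_r (1 - LL)); first lra.
rewrite /Rdiv Rmult_assoc Rinv_l; last lra.
rewrite /LL in h1 h2 *; lra.
Qed.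

Lemma zz_gt1 : 1 < zz.
Proof.
have hb := b0_pos; have [r0 r1] := rho_bd.
have hd0 : 0 < sK + rho * b0 by nra.
have -> : zz = 1 + b0 * (1 - rho) / (sK + rho * b0) by rewrite /zz; field; lra.
have : 0 < b0 * (1 - rho) / (sK + rho * b0) by apply: Rdiv_lt_0_compat; nra.
lra.
Qed.

Lemma zz_eq : (zz - 1) * sK + zz * rho * b0 = b0.
Proof.
have hb := b0_pos; have [r0 r1] := rho_bd.
rewrite /zz; field; nra.
Qed.

Lemma sn_pos : 0 < sqrt (INR n).
Proof.
apply: sqrt_lt_R0; have : (0 < n)%N by apply: leq_trans hn.
by move/ltP; apply: lt_0_INR.
Qed.

Lemma bb_q (b : I) : bb * q b <= LL.
Proof.
have hb := b0_pos; have [h1 h2] := LL_pos.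
rewrite /bb Rmult_assoc.
apply: (Rle_trans _ (b0 * sK)); first by apply: Rmult_le_compat_l; [lra|apply: Hqb].
have : b0 * (sK + 1) = LL by rewrite /b0; field; lra.
lra.
Qed.

Lemma Hsum_ok :
  \big[Rplus/0]_(b : I) (q b * ((zz - 1) + delta * zz * (Phi q bb b - 1))) <= bb.
Proof.
have hb := b0_pos; have [h1 h2] := LL_pos; have [r0 r1] := rho_bd.
have hz := zz_gt1; have hs := sn_pos.
have hbb : 0 <= bb by rewrite /bb; nra.
apply: (Rle_trans _ (\big[Rplus/0]_(b : I) ((zz - 1) * q b +
      (zz * bb * delta / (1 - LL)) * (q b * q b)))).
  apply: sumR_le => b _.
  have [q0 q1] := hq b.
  have hx : 0 <= bb * q b by nra.
  have := exp_bound hx (bb_q b) (ltac:(lra)).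
  rewrite /Phi => he.
  have he' : exp (bb * q b) - 1 <= bb * q b / (1 - LL).
    apply: (Rmult_le_reg_r (1 - LL)); first lra.
    rewrite /Rdiv Rmult_assoc Rinv_l; lra.
  have hdz : 0 <= delta * zz * q b by apply: Rmult_le_pos; nra.
  have := Rmult_le_compat_l _ _ _ hdz he'.
  rewrite /Rdiv => hh.
  have -> : zz * bb * delta * / (1 - LL) * (q b * q b) =
     delta * zz * q b * (bb * q b * / (1 - LL)) by ring.
  nra.
rewrite big_split /= -!big_distrr /=.
have Sq : \big[Rplus/0]_(b : I) q b <= sqrt (INR n) * sK.
  apply: (Rmult_le_reg_l (sqrt (INR n))) => //.
  rewrite big_distrr /=.
  apply: (Rle_trans _ (\big[Rplus/0]_(b : I) sK)); first by apply: sumR_le => b _; apply: Hqb.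
  rewrite sum_const_ord -{1}(sqrt_sqrt (INR n)); first lra.
  exact: pos_INR.
have HS' : \big[Rplus/0]_(b : I) (q b * q b) * delta <= c by lra.
have : zz * bb * delta / (1 - LL) * \big[Rplus/0]_(b : I) (q b * q b) <= zz * bb * rho.
  rewrite /rho /Rdiv.
  have -> : zz * bb * delta * / (1 - LL) * \big[Rplus/0]_(b : I) (q b * q b) =
     (zz * bb * / (1 - LL)) * (\big[Rplus/0]_(b : I) (q b * q b) * delta) by ring.
  have -> : zz * bb * (c * / (1 - LL)) = (zz * bb * / (1 - LL)) * c by ring.
  apply: Rmult_le_compat_l => //.
  apply: Rmult_le_pos; first nra; apply: Rlt_le; apply: Rinv_0_lt_compat; lra.
move=> h3.
have h4 : (zz - 1) * \big[Rplus/0]_(b : I) q b <= (zz - 1) * (sqrt (INR n) * sK).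
  apply: Rmult_le_compat_l => //; lra.
have := zz_eq; rewrite /bb => ze.
have : (zz - 1) * (sqrt (INR n) * sK) + zz * (b0 * sqrt (INR n)) * rho =
       b0 * sqrt (INR n).
  transitivity (sqrt (INR n) * ((zz - 1) * sK + zz * rho * b0)); first ring.
  rewrite ze; ring.
rewrite /bb in h3 *; move=> h5.
apply: (Rle_trans _ _ _ (Rplus_le_compat _ _ _ _ h4 h3)); lra.
Qed.

End Hsum.


Unset Implicit Arguments. Set Strict Implicit.

Lemma exp_INR_mul (y : nat) (a : R) : exp (INR y * a) = exp a ^ y.
Proof.
elim: y => [|k IH]; first by rewrite /= Rmult_0_l exp_0.
rewrite S_INR Rmult_plus_distr_r Rmult_1_l exp_plus IH /=; ring.
Qed.

Theorem lemmaA4 (delta : R) (p q : nat -> nat -> R) :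
  (0 < delta <= 1) ->
  (forall n i, (2 <= n)%N -> (i < n)%N ->
     (0 <= p n i < 1) /\ (0 <= q n i <= 1)) ->
  (exists K : R, forall n i, (2 <= n)%N -> (i < n)%N ->
     (q n i * q n i * INR n <= K)) ->
  subcritical delta q ->
  exists C : R, (0 < C) /\ exists y0 : nat, forall y : nat, (y0 <= y)%N ->
    forall eps : R, (0 < eps) ->
      exists N : nat, forall n : nat, (N <= n)%N -> forall i : 'I_n,
        (@Prob n delta (p n) (q n) (fun w => #|learned_set w i| == y)
           <= exp (- (C * INR y)) + eps).
Proof.
move=> hd hpq [K HK] [c [hc [N HN]]].
have K0 : 0 <= K.
  have := HK 2%N 0%N (leqnn 2) (isT : (0 < 2)%N).
  have := hpq 2%N 0%N (leqnn 2) (isT : (0 < 2)%N).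
  move=> [_ [h0 _]] h; have : 0 <= q 2%N 0%N * q 2%N 0%N * INR 2.
    apply: Rmult_le_pos; [nra|apply: pos_INR].
  lra.
pose c' := Rmax 0 c.
have hc' : 0 <= c' < 1.
  split; first by apply: Rmax_l.
  by apply: Rmax_lub_lt; lra.
have hcc : c <= c' by apply: Rmax_r.
pose sK := sqrt K + 1.
have sK0 : 0 < sK by have := sqrt_pos K; rewrite /sK; lra.
pose z := zz sK c'.
have z1 : 1 < z := zz_gt1 sK0 hc'.
have lnz : 0 < ln z.
  rewrite -ln_1; apply: ln_increasing; lra.
have [L0 L1] := LL_pos hc'.
exists (ln z / 2); split; first lra.
have [y0 Hy0] := INR_unbounded (2 * LL c' / ln z).
exists y0 => y hy eps heps.
exists (N + 2)%N => n hn i.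
have n2 : (2 <= n)%N by apply: leq_trans hn; apply: leq_addl.
have nN : (N <= n)%N by apply: leq_trans hn; apply: leq_addr.
have hq' : forall i : 'I_n, 0 <= q n i <= 1.
  by move=> j; have [_ ?] := hpq n j n2 (ltn_ord j).
have hp' : forall i : 'I_n, 0 <= p n i <= 1.
  by move=> j; have [[? ?] _] := hpq n j n2 (ltn_ord j); lra.
have Hqb : forall b : 'I_n, sqrt (INR n) * q n b <= sK.
  move=> b; have [q0 _] := hq' b.
  have hn0 := pos_INR n.
  have : sqrt (INR n) * q n b <= sqrt K.
    apply: sqrt_bound; first by apply: Rmult_le_pos => //; apply: sqrt_pos.
    have -> : sqrt (INR n) * q n b * (sqrt (INR n) * q n b) =
      (sqrt (INR n) * sqrt (INR n)) * (q n b * q n b) by ring.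
    rewrite sqrt_sqrt //.
    have := HK n b n2 (ltn_ord b); lra.
  rewrite /sK; lra.
have HS : delta * \big[Rplus/0]_(b : 'I_n) (q n b * q n b) <= c'.
  case: (classic (exists i, (i < n)%N /\ q n i <> 0)) => [ex|nex].
    have := HN n nN (delta * \big[Rplus/0]_(b : 'I_n) (q n b * q n b)) (q n) ex.
    move=> H.
    have E : forall i, (i < n)%N ->
        \big[Rplus/0]_(j < n) (delta * (q n i * q n j) * q n j) =
        delta * \big[Rplus/0]_(b : 'I_n) (q n b * q n b) * q n i.
      move=> i0 _.
      have -> : delta * \big[Rplus/0]_(b : 'I_n) (q n b * q n b) * q n i0 =
         (delta * q n i0) * \big[Rplus/0]_(b : 'I_n) (q n b * q n b) by ring.
      rewrite big_distrr /=; apply: eq_bigr => j _; ring.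
    have := H E => habs.
    have := Rle_abs (delta * \big[Rplus/0]_(b : 'I_n) (q n b * q n b)); lra.
  rewrite big1 ?Rmult_0_r //; first lra.
  move=> b _; have : q n b = 0.
    apply: NNPP => hb; apply: nex; exists b; split => //; exact: ltn_ord.
  by move=> ->; ring.
have Hsum := Hsum_ok hd hq' sK0 hc' n2 Hqb HS.
have b00 : 0 <= bb n sK c'.
  rewrite /bb; have := b0_pos sK0 hc'; have := sqrt_pos (INR n); nra.
have hz1 : 1 <= z by lra.
have Pb := prob_bound hd hp' hq' hz1 b00 Hsum i y.
have HP : Phi (q n) (bb n sK c') i <= exp (LL c') by apply: exp_le; apply: bb_q.
have zy : z ^ y = exp (INR y * ln z) by rewrite exp_INR_mul exp_ln //; lra.
have hyy : INR y0 <= INR y by apply: le_INR; apply/leP.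
have h2 : 2 * LL c' < INR y * ln z.
  have : 2 * LL c' / ln z * ln z < INR y * ln z.
    apply: Rmult_lt_compat_r => //; lra.
  have -> : 2 * LL c' / ln z * ln z = 2 * LL c' by field; lra.
  done.
apply: (Rle_trans _ _ _ Pb).
apply: (@Rle_trans _ (exp (- (ln z / 2 * INR y)))); last lra.
rewrite zy /Rdiv -exp_Ropp.
apply: (@Rle_trans _ (exp (LL c') * exp (- (INR y * ln z)))).
  apply: Rmult_le_compat_r => //; apply: Rlt_le; apply: exp_pos.
rewrite -exp_plus; apply: exp_le; lra.
Qed.
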